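(* Let $(V,\le,\preccurlyeq)$ be a mixed lattice vector space such that $(V,\le)$ is a lattice (a Riesz space). If $\tau$ is a locally symmetric-solid vector topology on $V$, then $\tau$ is a locally solid Riesz space topology on $(V,\le)$.
   Context: A mixed lattice vector space $(V,\le,\preccurlyeq)$ is a real vector space $V$ with two partial orderings $\le$ (initial order) and $\preccurlyeq$ (specific order), each making $V$ a partially ordered vector space, with positive cones $V_p=\{x:0\le x\}$, $V_{sp}=\{x:0\preccurlyeq x\}$, such that: (1) for all $x,y$ the elements $x\curlyvee y=\min\{w: w\succcurlyeq x,\ w\ge y\}$ and $x\curlywedge y=\max\{w: w\preccurlyeq x,\ w\le y\}$ exist (min/max with respect to $\le$); (2) $x\preccurlyeq y$ implies $x\le y$; (3) $x\curlyvee y, x\curlywedge y\in V_{sp}$ whenever $x,y\in V_{sp}$. Notation: $x^u=0\curlyvee x$, $x^l=0\curlyvee(-x)$, $s(x)=x^u+x^l$. A set $A$ is symmetric-solid if $x\in A$ and $s(y)\le s(x)$ imply $y\in A$; a vector topology is locally symmetric-solid if it has a base at zero of symmetric-solid sets. A locally solid Riesz space topology on $(V,\le)$ is a vector topology with a base at zero of sets $S$ such that $y\in S$ and $|x|\le|y|$ imply $x\in S$, where $|\cdot|$ is the lattice absolute value of $(V,\le)$. *)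

(* Defs.v *)
From HB Require Import structures.
From mathcomp Require Import all_boot all_order all_algebra.
From mathcomp Require Import all_classical all_reals all_analysis.
Set Implicit Arguments. Unset Strict Implicit. Unset Printing Implicit Defensive.
Import Order.TTheory GRing.Theory Num.Theory.
Local Open Scope classical_set_scope.
Local Open Scope ring_scope.

Section Defs.
Variables (R : realType) (V : lmodType R).
Implicit Types (le sle : V -> V -> Prop) (x y z w : V).

Definition povs le :=
  [/\ (forall x, le x x),
      (forall x y, le x y -> le y x -> x = y),
      (forall x y z, le x y -> le y z -> le x z),
      (forall x y z, le x y -> le (x + z) (y + z)) &
      (forall (a : R) x y, 0 <= a -> le x y -> le (a *: x) (a *: y))].

Definition is_mixed_upper le sle x y w :=
  [/\ sle x w, le y w & forall w', sle x w' -> le y w' -> le w w'].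

Definition is_mixed_lower le sle x y w :=
  [/\ sle w x, le w y & forall w', sle w' x -> le w' y -> le w' w].

Definition mixed_lattice_vs le sle :=
  [/\ povs le /\ povs sle,
      (forall x y, exists w, is_mixed_upper le sle x y w),
      (forall x y, exists w, is_mixed_lower le sle x y w),
      (forall x y, sle x y -> le x y) &
      (forall x y, sle 0 x -> sle 0 y ->
         (forall w, is_mixed_upper le sle x y w -> sle 0 w) /\
         (forall w, is_mixed_lower le sle x y w -> sle 0 w))].

Definition is_s le sle x s := exists u l,
  [/\ is_mixed_upper le sle 0 x u, is_mixed_upper le sle 0 (- x) l & s = u + l].

Definition symmetric_solid le sle (A : set V) :=
  forall x y sx sy, A x -> is_s le sle x sx -> is_s le sle y sy ->
    le sy sx -> A y.

Definition is_sup le x y w :=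
  [/\ le x w, le y w & forall w', le x w' -> le y w' -> le w w'].
Definition is_inf le x y w :=
  [/\ le w x, le w y & forall w', le w' x -> le w' y -> le w' w].
Definition is_lattice le :=
  (forall x y, exists w, is_sup le x y w) /\ (forall x y, exists w, is_inf le x y w).

Definition solid le (S : set V) :=
  forall x y ax ay, is_sup le x (- x) ax -> is_sup le y (- y) ay ->
    S y -> le ax ay -> S x.

End Defs.

Definition has_zero_base (R : realType) (V : topologicalLmodType R)
  (P : set V -> Prop) :=
  forall U : set V, nbhs (0 : V) U -> exists S : set V, [/\ nbhs (0 : V) S, P S & S `<=` U].

(* Main.v *)
Require Import Defs.
From HB Require Import structures.
From mathcomp Require Import all_boot all_order all_algebra.
From mathcomp Require Import all_classical all_reals all_analysis.
Local Open Scope classical_set_scope.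
Local Open Scope ring_scope.
Import GRing.Theory.

Theorem theorem4p9 (R : realType) (V : topologicalLmodType R)
  (le sle : V -> V -> Prop) :
  mixed_lattice_vs le sle -> is_lattice le ->
  has_zero_base (symmetric_solid le sle) ->
  has_zero_base (solid le).
Proof.
move=> [[[lrefl lanti ltr ladd lsc] [srefl santi str sadd ssc]] exU exL sle_le _].
move=> [exsup _] hb U U0.
have laddl : forall x y z, le x y -> le (z + x) (z + y).
  by move=> x y z h; rewrite ![z + _]addrC; apply: ladd.
have ladd2 : forall a b c d, le a b -> le c d -> le (a + c) (b + d).
  move=> a b c d h1 h2; apply: (ltr _ (b + c)); first exact: ladd.
  exact: laddl.
have exs : forall x, exists s, is_s le sle x s.
  move=> x; have [u hu] := exU 0 x; have [l hl] := exU 0 (- x).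
  by exists (u + l), u, l.
have sge0 : forall x s, is_s le sle x s -> sle 0 s.
  move=> x s [u [l [[hu _ _] [hl _ _] ->]]].
  apply: (str _ l) => //; have := sadd _ _ l hu; by rewrite add0r addrC.
have spos : forall z, sle 0 z -> is_s le sle z z.
  move=> z hz; exists z, 0; split; last by rewrite addr0.
    by split=> // w' _ ->.
  split=> //; first by have := ladd _ _ (- z) (sle_le _ _ hz); rewrite add0r subrr.
  by move=> w' h _; apply: sle_le.
have supuniq : forall x a b, is_sup le x (- x) a -> is_sup le x (- x) b -> a = b.
  move=> x a b [h1 h2 h3] [g1 g2 g3]; apply: lanti; [exact: h3|exact: g3].
have abs_le_s : forall y ay sy, is_sup le y (- y) ay -> is_s le sle y sy -> le ay sy.
  move=> y ay sy [_ _ h] [u [l [[hu1 hu2 _] [hl1 hl2 _] ->]]].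
  apply: h.
    by rewrite -[y]addr0; apply: ladd2 => //; apply: sle_le.
  by rewrite -[- y]add0r; apply: ladd2 => //; apply: sle_le.
have key : forall x y ax ay sx sy, is_sup le x (- x) ax -> is_sup le y (- y) ay ->
    le ax ay -> is_s le sle x sx -> is_s le sle y sy -> le sx (sy + sy).
  move=> x y ax ay sx sy hax hay hle hsx hsy.
  have h1 := abs_le_s _ _ _ hay hsy.
  have hs0 := sge0 _ _ hsy.
  move: hsx hax => [u [l [[_ _ hu] [_ _ hl] ->]]] [hx1 hx2 _].
  apply: ladd2; [apply: hu|apply: hl] => //; apply: (ltr _ ax) => //;
    by apply: (ltr _ ay).
have [A [A0 As AU]] := hb U U0.
have := @add_continuous V (0, 0); rewrite /continuous_at/= addr0 => /(_ A A0)[]/=.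
move=> [W1 W2] [W10 W20] Wadd.
have W0 : nbhs (0 : V) (W1 `&` W2) by apply: filterI.
have [B [B0 Bs BW]] := hb _ W0.
pose S := fun x : V => exists y ax ay, [/\ B y, is_sup le x (- x) ax,
   is_sup le y (- y) ay & le ax ay].
exists S; split.
- apply: filterS B0 => y By; have [ay hay] := exsup y (- y).
  by exists y, ay, ay.
- move=> x y ax ay hax hay [y0 [ay' [ay0 [By0 hay' hay0 hle]]]] hxy.
  exists y0, ax, ay0; split=> //; apply: (ltr _ ay) => //.
  by rewrite (supuniq _ _ _ hay hay').
- move=> x [y [ax [ay [By hax hay hle]]]]; apply: AU.
  have [sx hsx] := exs x; have [sy hsy] := exs y.
  have Bsy : B sy by exact: (Bs y sy sy sy By hsy (spos _ (sge0 _ _ hsy)) (lrefl _)).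
  have Asy : A (sy + sy).
    by apply: (Wadd (sy, sy)); split; [exact: (proj1 (BW _ Bsy))|exact: (proj2 (BW _ Bsy))].
  apply: (As (sy + sy) x (sy + sy) sx) => //.
    apply: spos; apply: (str _ sy); first exact: (sge0 _ _ hsy).
    by have := sadd _ _ sy (sge0 _ _ hsy); rewrite add0r addrC.
  exact: (key x y ax ay sx sy).
Qed.
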